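(* Let $u\in R^{\times}$ and $a,b\in R$, and let $\mathcal{B}_{(u,a,b)}$ be the corresponding $H_N^q$-cleft extension of $R$. If $1-q\in R^{\times}$, then there exists $a'\in R$ such that $\mathcal{B}_{(u,a,b)}\cong\mathcal{B}_{(u,a',0)}$ as right $H_N^q$-comodule algebras.
   Context: $R$ is a commutative unital ring, $N\ge2$ an integer, and $q\in R$ a root of the $N$-th cyclotomic polynomial over $\mathbb{Z}$. $H_N^q$ is the Taft Hopf algebra over $R$: generated as an algebra by $g,x$ with $g^N=1$, $x^N=0$, $xg=qgx$, and $\Delta(g)=g\otimes g$, $\Delta(x)=1\otimes x+x\otimes g$, $\varepsilon(g)=1$, $\varepsilon(x)=0$, $S(g)=g^{-1}$, $S(x)=-q^{-1}g^{-1}x$. For $u\in R^{\times}$, $a,b\in R$, $\mathcal{B}_{(u,a,b)}$ is the $R$-algebra generated by $v_g,v_x$ subject to $v_g^N=u$, $v_x^N=a$, $v_xv_g=qv_gv_x+bv_g^2$; it is a free $R$-module with basis $\{v_g^mv_x^n:0\le m,n<N\}$ and a right $H_N^q$-comodule algebra via $v_g\mapsto v_g\otimes g$, $v_x\mapsto 1\otimes x+v_x\otimes g$, and it is an $H_N^q$-cleft extension of $R$ (coinvariants equal to $R$, with a convolution-invertible comodule map $H_N^q\to\mathcal{B}_{(u,a,b)}$, $g^mx^n\mapsto v_g^mv_x^n$). *)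

(* Defs.v *)
From HB Require Import structures.
From mathcomp Require Import all_boot all_order all_algebra all_field.
Set Implicit Arguments. Unset Strict Implicit. Unset Printing Implicit Defensive.
Import GRing.Theory.
Local Open Scope ring_scope.

Definition cyclotomic_root (R : comUnitRingType) (N : nat) (q : R) : Prop :=
  root (map_poly (fun z : int => z%:~R) ('Phi_N)) q.

Definition is_alg_hom (R : comUnitRingType) (A C : algType R) (f : A -> C) : Prop :=
  [/\ forall x y, f (x + y) = f x + f y,
      forall (r : R) x, f (r *: x) = r *: f x,
      forall x y, f (x * y) = f x * f y
    & f 1 = 1].

Definition B_rel (R : comUnitRingType) (N : nat) (q u a b : R) (C : algType R)
  (cg cx : C) : Prop :=
  [/\ cg ^+ N = u%:A, cx ^+ N = a%:A & cx * cg = q *: (cg * cx) + b *: cg ^+ 2].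

(* (A, vg, vx) is THE R-algebra generated by vg, vx subject to the relations
   of B_(u,a,b): universal property of the presentation. *)
Definition is_B (R : comUnitRingType) (N : nat) (q u a b : R) (A : algType R)
  (vg vx : A) : Prop :=
  B_rel N q u a b vg vx /\
  forall (C : algType R) (cg cx : C), B_rel N q u a b cg cx ->
    (exists h : A -> C, [/\ is_alg_hom h, h vg = cg & h vx = cx]) /\
    (forall h1 h2 : A -> C, is_alg_hom h1 -> is_alg_hom h2 ->
       h1 vg = h2 vg -> h1 vx = h2 vx -> forall y, h1 y = h2 y).

(* A ⊗_R H_N^q is identified with families 'I_N -> 'I_N -> A via the R-basis
   {g^i x^j : 0 <= i, j < N} of H_N^q:  s  <->  \sum_(i,j) s i j ⊗ g^i x^j. *)
Definition tens (R : comUnitRingType) (N : nat) (A : algType R) := 'I_N -> 'I_N -> A.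

(* product in A ⊗ H_N^q, using g^i x^j g^i' x^j' = q^(j i') g^(i+i' mod N) x^(j+j')
   and x^N = 0 *)
Definition tmul (R : comUnitRingType) (N : nat) (q : R) (A : algType R)
  (s t : tens N A) : tens N A :=
  fun k l => \sum_(i < N) \sum_(j < N) \sum_(i' < N) \sum_(j' < N)
    if (((i + i') %% N)%N == k :> nat) && ((j + j')%N == l :> nat)
    then (q ^+ (j * i')) *: (s i j * t i' j') else 0.

(* a ⊗ g^m x^n *)
Definition tbas (R : comUnitRingType) (N : nat) (A : algType R) (y : A) (m n : nat)
  : tens N A := fun i j => if (i == m :> nat) && (j == n :> nat) then y else 0.

Definition tadd (R : comUnitRingType) (N : nat) (A : algType R) (s t : tens N A)
  : tens N A := fun i j => s i j + t i j.

(* rho : A -> A ⊗ H_N^q is the (right H_N^q-comodule algebra) coaction of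
   B_(u,a,b): the R-algebra map with vg |-> vg ⊗ g, vx |-> 1 ⊗ x + vx ⊗ g. *)
Definition is_B_coaction (R : comUnitRingType) (N : nat) (q : R) (A : algType R)
  (vg vx : A) (rho : A -> tens N A) : Prop :=
  [/\ forall y z, rho (y + z) = tadd (rho y) (rho z),
      forall (r : R) y, rho (r *: y) = (fun i j => r *: rho y i j),
      forall y z, rho (y * z) = tmul q (rho y) (rho z)
    & rho 1 = tbas 1 0 0] /\
  rho vg = tbas vg 1 0 /\ rho vx = tadd (tbas 1 0 1) (tbas vx 1 0).

Definition comod_alg_iso (R : comUnitRingType) (N : nat) (A A' : algType R)
  (rho : A -> tens N A) (rho' : A' -> tens N A') (f : A -> A') : Prop :=
  [/\ is_alg_hom f, bijective f
    & forall y i j, rho' (f y) i j = f (rho y i j)].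

(* Main.v *)
Require Import Defs.
From HB Require Import structures.
From mathcomp Require Import all_boot all_order all_algebra all_field.
From mathcomp Require Import ring.
Import GRing.Theory.
Set Implicit Arguments. Unset Strict Implicit. Unset Printing Implicit Defensive.
Local Open Scope ring_scope.

Fixpoint qb (S : pzRingType) (q : S) (n k : nat) : S :=
  match n with
  | 0 => (k == 0)%:R
  | n'.+1 => (if k is k'.+1 then qb q n' k' else 0) + q ^+ k * qb q n' k
  end.

Definition qf (S : pzRingType) (q : S) (m : nat) : S := \prod_(i < m) (1 - q ^+ i.+1).

Lemma qb_gt (S : pzRingType) (q : S) n k : (n < k)%N -> qb q n k = 0.
Proof.
elim: n k => [|n IH] [|k] //= H.
by rewrite !IH ?mulr0 ?addr0 // ltnW.
Qed.

Lemma qb_n0 (S : pzRingType) (q : S) n : qb q n 0 = 1.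
Proof. by elim: n => [|n IH] //=; rewrite IH expr0 mulr1 add0r. Qed.

Lemma qb_nn (S : pzRingType) (q : S) n : qb q n n = 1.
Proof. by elim: n => [|n IH] //=; rewrite IH qb_gt // mulr0 addr0. Qed.

Lemma qfS (S : pzRingType) (q : S) m : qf q m.+1 = qf q m * (1 - q ^+ m.+1).
Proof. by rewrite /qf big_ord_recr. Qed.

Lemma qb_fact (S : comPzRingType) (q : S) n k : (k <= n)%N ->
  qb q n k * qf q k * qf q (n - k) = qf q n.
Proof.
elim: n k => [|n IH] [|k] //= Hk.
- by rewrite /qf !big_ord0 !mulr1.
- by rewrite qb_n0 expr0 !mul1r add0r subn0 /qf big_ord0 !mul1r.
- rewrite subSS.
  case: (ltnP k n) => Hkn.
  + set m := (n - k.+1)%N.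
    have Hm : (n - k = m.+1)%N by rewrite /m subnSK.
    have I1 := IH k (ltnW Hkn); rewrite Hm in I1.
    have I2 := IH k.+1 Hkn; rewrite -/m in I2.
    rewrite Hm.
    have He : q ^+ k.+1 * q ^+ m.+1 = q ^+ n.+1.
      by rewrite -exprD addSn -Hm subnKC // ltnW.
    rewrite !qfS in I1 I2 *.
    set A := qb q n k in I1 *; set B := qb q n k.+1 in I2 *.
    set Fk := qf q k in I1 I2 *; set Fm := qf q m in I1 I2 *.
    set Fn := qf q n in I1 I2 *.
    have -> : (A + q ^+ k.+1 * B) * (Fk * (1 - q ^+ k.+1)) * (Fm * (1 - q ^+ m.+1))
      = (1 - q ^+ k.+1) * (A * Fk * (Fm * (1 - q ^+ m.+1)))
        + (q ^+ k.+1 - q ^+ k.+1 * q ^+ m.+1) * (B * (Fk * (1 - q ^+ k.+1)) * Fm).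
      by ring.
    rewrite I1 I2 He; ring.
  + have Hkn' : k = n by apply/eqP; rewrite eqn_leq Hkn -ltnS Hk.
    subst k; rewrite (qb_gt q (ltnSn n)) mulr0 addr0 subnn.
    by rewrite qb_nn /qf big_ord0 mulr1 mul1r.
Qed.

Lemma qb_prim0 (S : idomainType) (z : S) N k :
  N.-primitive_root z -> (0 < k < N)%N -> qb z N k = 0.
Proof.
move=> pz /andP [k0 kN].
have nz i : (0 < i < N)%N -> 1 - z ^+ i != 0.
  move=> /andP [i0 iN]; rewrite subr_eq0 eq_sym -(prim_order_dvd pz).
  apply/negP => /dvdn_leq => /(_ i0); rewrite leqNgt iN.
  done.
have nzf m : (m < N)%N -> qf z m != 0.
  move=> mN; rewrite /qf; apply/prodf_neq0 => i _; apply: nz.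
  by rewrite ltn0Sn /= (leq_ltn_trans _ mN).
have := qb_fact z (ltnW kN).
have -> : qf z N = 0.
  case: N pz kN {nz nzf} => [|N] pz kN //.
  by rewrite qfS (prim_expr_order pz) subrr mulr0.
move/eqP; rewrite !mulf_eq0 (negbTE (nzf _ kN)) orbF.
rewrite (negbTE (nzf (N - k)%N _)) ?orbF; first by move/eqP.
by rewrite ltn_subrL k0 (leq_ltn_trans (leq0n k) kN).
Qed.

Definition qbP (n k : nat) : {poly int} := qb 'X n k.

Lemma qb_eval (S : comNzRingType) (q : S) n k :
  qb q n k = (map_poly (fun z : int => z%:~R) (qbP n k)).[q].
Proof.
rewrite /qbP; elim: n k => [|n IH] k /=.
  by rewrite -polyC_natr map_polyC hornerC /= rmorph_nat.
rewrite rmorphD hornerD rmorphM hornerM rmorphXn /= map_polyX hornerXn -IH.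
by case: k => [|k] //=; rewrite ?rmorph0 ?horner0 // -IH.
Qed.

Lemma ZtoC_comp (p : {poly int}) :
  map_poly (fun z : int => z%:~R) p = map_poly (ratr : rat -> algC) (map_poly (fun z : int => z%:~R) p).
Proof.
rewrite -map_poly_comp; apply: eq_map_poly => b /=; by rewrite rmorph_int.
Qed.

Lemma qbP_dvd N k : (0 < k < N)%N -> exists Q : {poly int}, qbP N k = Q * 'Phi_N.
Proof.
move=> Hk.
have N0 : (0 < N)%N by case/andP: Hk => k0 kN; apply: leq_trans kN.
case: (C_prim_root_exists N0) => z pz.
have Hz : root (map_poly (fun z : int => z%:~R) (qbP N k) : {poly algC}) z.
  by rewrite /root -qb_eval qb_prim0.
have [pf [Dpf mon_pf] dv_pf] := minCpolyP z.
have Epf : pf = map_poly (fun z : int => z%:~R) 'Phi_N.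
  apply: (@map_inj_poly _ _ (ratr : rat -> algC)); first exact: fmorph_inj.
    by rewrite rmorph0.
  by rewrite -Dpf (minCpoly_cyclotomic pz) -(Cintr_Cyclotomic pz) ZtoC_comp.
have Hd : pf %| map_poly (fun z : int => z%:~R) (qbP N k).
  by rewrite -dv_pf -ZtoC_comp.
have monP := Cyclotomic_monic N.
set P := 'Phi_N in monP Epf *.
have E := Pdiv.IdomainMonic.divp_eq monP (qbP N k).
exists (qbP N k %/ P).
set r := qbP N k %% P in E.
suff r0 : r = 0 by rewrite r0 addr0 in E.
have inj : injective (fun z : int => z%:~R : rat) by exact: intr_inj.
have Er : map_poly (fun z : int => z%:~R : rat) r =
  map_poly (fun z : int => z%:~R) (qbP N k) -
  map_poly (fun z : int => z%:~R) (qbP N k %/ P) * map_poly (fun z : int => z%:~R) P.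
  have Er0 : r = qbP N k - qbP N k %/ P * P.
    by apply/eqP; rewrite eq_sym subr_eq addrC -E.
  by rewrite Er0 rmorphB rmorphM.
have Hr : pf %| map_poly (fun z : int => z%:~R : rat) r.
  by rewrite Er dvdp_sub // Epf dvdp_mull.
have szr : (size r < size P)%N by apply: ltn_modpN0; apply: monic_neq0.
apply: (@map_inj_poly _ _ (fun z : int => z%:~R : rat)) => //; rewrite rmorph0.
apply/eqP; apply/negP => /negP nz.
have := dvdp_leq nz Hr.
by rewrite Epf !size_map_inj_poly // leqNgt szr.
Qed.

Lemma qb_root0 (R : comNzRingType) N (q : R) k :
  root (map_poly (fun z : int => z%:~R) ('Phi_N)) q -> (0 < k < N)%N -> qb q N k = 0.
Proof.
move=> Hq Hk; have [Q EQ] := qbP_dvd Hk.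
by rewrite qb_eval EQ rmorphM hornerM (eqP Hq) mulr0.
Qed.

Section Expand.
Variables (R : comUnitRingType) (C : algType R) (q : R) (X Y : C).
Hypothesis YX : Y * X = q *: (X * Y).

Lemma YXk k : Y * X ^+ k = q ^+ k *: (X ^+ k * Y).
Proof.
elim: k => [|k IH]; first by rewrite !expr0 mul1r mulr1 scale1r.
rewrite exprSr mulrA IH -scalerAl -(mulrA (X ^+ k) Y X) YX -scalerAr scalerA mulrA -!exprSr. done.
Qed.

Lemma expand n : (X + Y) ^+ n = \sum_(k < n.+1) qb q n k *: (X ^+ k * Y ^+ (n - k)).
Proof.
elim: n => [|n IH].
  by rewrite big_ord1 /= !expr0 mulr1 scale1r.
rewrite exprS IH mulrDl !mulr_sumr.
under [in RHS]eq_bigr => i _ do rewrite /= scalerDl.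
rewrite big_split /= [in RHS]big_ord_recl /= scale0r add0r.
rewrite [X in _ = _ + X]big_ord_recr /= qb_gt // mulr0 scale0r addr0.
congr (_ + _); apply: eq_bigr => i _.
  by rewrite /bump /= add1n add0n subSS -scalerAr mulrA -exprS.
rewrite -scalerAr mulrA YXk -scalerAl scalerA (mulrC (qb q n i)) -mulrA -exprS subSn //.
by rewrite -ltnS.
Qed.
End Expand.

Lemma frob (R : comUnitRingType) (C : algType R) (q : R) N (X Y : C) :
  (2 <= N)%N -> root (map_poly (fun z : int => z%:~R) ('Phi_N)) q ->
  Y * X = q *: (X * Y) -> (X + Y) ^+ N = X ^+ N + Y ^+ N.
Proof.
move=> N2 Hq YX; rewrite (expand YX) big_ord_recl /= qb_n0 scale1r expr0 mul1r subn0.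
case: N N2 Hq => [|N] // N2 Hq.
have b0 : forall j, bump 0 j = j.+1 by [].
rewrite big_ord_recr big1 ?add0r.
  rewrite b0 (qb_nn q N.+1) subnn expr0 mulr1 scale1r /= add0r addrC; done.
move=> i _; rewrite b0 (qb_root0 (k := i.+1) Hq) ?scale0r //.
by rewrite ltn0Sn /= ltnS.
Qed.


Section AH.
Variables (R : comUnitRingType) (A C D : algType R).

Lemma ah0 (h : A -> C) : is_alg_hom h -> h 0 = 0.
Proof.
case=> hD _ _ _; have E := hD 0 0; rewrite addr0 in E.
by have := congr1 (fun z => z - h 0) E; rewrite /= subrr addrK => /esym.
Qed.

Lemma ahN (h : A -> C) x : is_alg_hom h -> h (- x) = - h x.
Proof.
move=> H; have := ah0 H; case: H => hD _ _ _.
by rewrite -(subrr x) hD => /eqP; rewrite addrC addr_eq0 => /eqP.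
Qed.

Lemma ahB (h : A -> C) x y : is_alg_hom h -> h (x - y) = h x - h y.
Proof. by move=> H; have [hD _ _ _] := H; rewrite hD ahN. Qed.

Lemma ahX (h : A -> C) x n : is_alg_hom h -> h (x ^+ n) = h x ^+ n.
Proof.
case=> _ _ hM h1; elim: n => [|n IH]; first by rewrite !expr0.
by rewrite !exprS hM IH.
Qed.

Lemma ahA (h : A -> C) r : is_alg_hom h -> h (r%:A) = r%:A.
Proof. by case=> _ hZ _ h1; rewrite hZ h1. Qed.

Lemma ah_id : is_alg_hom (@id A).
Proof. by []. Qed.

Lemma ah_comp (h : A -> C) (k : C -> D) : is_alg_hom h -> is_alg_hom k ->
  is_alg_hom (fun x => k (h x)).
Proof.
case=> hD hZ hM h1 [kD kZ kM k1]; split.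
- by move=> x y; rewrite hD kD.
- by move=> r x; rewrite hZ kZ.
- by move=> x y; rewrite hM kM.
- by rewrite h1 k1.
Qed.

Lemma ah_sum (h : A -> C) I (r : seq I) (P : pred I) (F : I -> A) :
  is_alg_hom h -> h (\sum_(i <- r | P i) F i) = \sum_(i <- r | P i) h (F i).
Proof.
move=> H; have [hD _ _ _] := H.
by apply: (big_morph h hD (ah0 H)).
Qed.
End AH.

Section Gen.
Variables (R : comUnitRingType) (A : algType R) (S : {pred A}).
Hypothesis S1 : 1 \in S.
Hypothesis SD : forall x y, x \in S -> y \in S -> x + y \in S.
Hypothesis SZ : forall (r : R) x, x \in S -> r *: x \in S.
Hypothesis SM : forall x y, x \in S -> y \in S -> x * y \in S.

Lemma S_closed : subalg_closed S.
Proof.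
split.
- exact: S1.
- move=> r x y xS yS; apply: SD => //; exact: SZ.
- move=> x y; exact: SM.
Qed.

HB.instance Definition _ := GRing.isSubalgClosed.Build R A S S_closed.

Record subT := SubT { sv : A; _ : sv \in S }.
HB.instance Definition _ := [isSub for sv].
HB.instance Definition _ := [Choice of subT by <:].
HB.instance Definition _ := [SubChoice_isSubAlgebra of subT by <:].

Lemma valP4 : is_alg_hom (val : subT -> A).
Proof.
split.
- exact: rmorphD.
- move=> r x; exact: linearZ.
- exact: rmorphM.
- exact: rmorph1.
Qed.
Lemma valX (x : subT) n : val (x ^+ n) = val x ^+ n.
Proof. exact: rmorphXn. Qed.
Lemma valA (r : R) : val (r%:A : subT) = r%:A.
Proof. by rewrite linearZ /=; congr (_ *: _); exact: rmorph1. Qed.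


Lemma gen_all N q u a b vg vx : is_B N q u a b vg vx -> vg \in S -> vx \in S ->
  forall y, y \in S.
Proof.
case=> rel univ gS xS y.
pose cg : subT := SubT gS; pose cx : subT := SubT xS.
have [vD vZ vM v1] := valP4.
have Hrel : B_rel N q u a b cg cx.
  case: rel => r1 r2 r3; split; apply: val_inj.
  - by rewrite valX valA.
  - by rewrite valX valA.
  - by rewrite vM vD !vZ vM valX.
have [[h [hh hg hx]] _] := univ _ cg cx Hrel.
have [_ uniq] := univ _ vg vx rel.
have E := uniq (fun y => val (h y)) id (ah_comp hh valP4) (ah_id A).
rewrite -(E _ _ y) /=; first exact: (valP (h y)).
- by rewrite hg.
- by rewrite hx.
Qed.
End Gen.


Lemma shift (R : comUnitRingType) (C : algType R) (g x : C) (q b e : R) :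
  x * g = q *: (g * x) + b *: g ^+ 2 ->
  (x + e *: g) * g = q *: (g * (x + e *: g)) + (b + e - q * e) *: g ^+ 2.
Proof.
move=> H; rewrite mulrDl H mulrDr -scalerAl -scalerAr expr2 scalerDr scalerA.
rewrite -!addrA; congr (_ + _); rewrite -!scalerDl; congr (_ *: _); ring.
Qed.

Lemma qcomm (R : comUnitRingType) (C : algType R) (g x : C) (q d : R) :
  x * g = q *: (g * x) + 0 *: g ^+ 2 -> x * (d *: g) = q *: ((d *: g) * x).
Proof.
move=> H; rewrite -scalerAr H scale0r addr0 scalerA mulrC -scalerA scalerAl.
done.
Qed.

Lemma f_tmul (R : comUnitRingType) (A C : algType R) (f : A -> C) N (q : R)
  (s t : tens N A) k l : is_alg_hom f ->
  f (tmul q s t k l) = tmul q (fun i j => f (s i j)) (fun i j => f (t i j)) k l.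
Proof.
move=> fh; have [_ fZ fM _] := fh.
rewrite /tmul ah_sum //; apply: eq_bigr => i _.
rewrite ah_sum //; apply: eq_bigr => j _.
rewrite ah_sum //; apply: eq_bigr => i' _.
rewrite ah_sum //; apply: eq_bigr => j' _.
by case: ifP => _; rewrite ?ah0 // fZ fM.
Qed.

Lemma f_tbas (R : comUnitRingType) (A C : algType R) (f : A -> C) N (y : A) m n
  (i j : 'I_N) : is_alg_hom f -> f (tbas y m n i j) = tbas (f y) m n i j.
Proof. by move=> fh; rewrite /tbas; case: ifP => _; rewrite ?ah0. Qed.

Lemma tmul_ext (R : comUnitRingType) (A : algType R) N (q : R) (s s' t t' : tens N A) k l :
  (forall i j, s i j = s' i j) -> (forall i j, t i j = t' i j) ->
  tmul q s t k l = tmul q s' t' k l.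
Proof.
move=> Hs Ht; rewrite /tmul; apply: eq_bigr => i _; apply: eq_bigr => j _.
apply: eq_bigr => i' _; apply: eq_bigr => j' _.
by rewrite Hs Ht.
Qed.

Unset Implicit Arguments.

Theorem corollary1p6 (R : comUnitRingType) (N : nat) (q : R) :
  (2 <= N)%N -> cyclotomic_root N q ->
  forall (u a b : R), u \is a GRing.unit ->
  forall (A : algType R) (vg vx : A) (rho : A -> tens N A),
    is_B N q u a b vg vx -> is_B_coaction q vg vx rho ->
  (1 - q) \is a GRing.unit ->
  exists a' : R,
    forall (A' : algType R) (vg' vx' : A') (rho' : A' -> tens N A'),
      is_B N q u a' 0 vg' vx' -> is_B_coaction q vg' vx' rho' ->
      exists f : A -> A', comod_alg_iso rho rho' f.
Proof.
move=> N2 Hq u a b Hu A vg vx rho HB Hrho Hq1.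
set d := b / (1 - q).
have Hd : b = d - q * d by rewrite /d -[X in X = _](divrK Hq1) /=; ring.
exists (a - d ^+ N * u).
move=> A' vg' vx' rho' HB' Hrho'.
have HB0 := HB; have HB0' := HB'.
case: HB => [[g1 x1 r1] univ]; case: HB' => [[g1' x1' r1'] univ'].
have relf : B_rel N q u a b vg' (vx' + d *: vg').
  split => //.
  - rewrite addrC (frob N2 Hq (qcomm d r1')) exprZn g1' x1' scalerA -scalerDl.
    by congr (_ *: _); ring.
  - by rewrite (shift d r1') Hd; congr (_ + _); congr (_ *: _); ring.
have r0 : (vx + (- d) *: vg) * vg = q *: (vg * (vx + (- d) *: vg)) + 0 *: vg ^+ 2.
  by rewrite (shift (- d) r1) Hd; congr (_ + _); congr (_ *: _); ring.
have relg : B_rel N q u (a - d ^+ N * u) 0 vg (vx + (- d) *: vg).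
  split => //.
  have Evx : vx = d *: vg + (vx + (- d) *: vg).
    by rewrite scaleNr addrCA subrr addr0.
  move: x1; rewrite {1}Evx.
  rewrite (frob N2 Hq (qcomm d r0)) exprZn g1 scalerA => E.
  apply: (addrI ((d ^+ N * u) *: 1)). rewrite E -scalerDl; congr (_ *: _); ring.
have [[f [fh fg fx]] _] := univ _ _ _ relf.
have [[g [gh gg gx]] _] := univ' _ _ _ relg.
have [_ uA] := univ _ _ _ (proj1 HB0).
have [_ uA'] := univ' _ _ _ (proj1 HB0').
have gf : cancel f g.
  move=> y; apply: (uA _ _ (ah_comp fh gh) (ah_id A)) => /=.
  - by rewrite fg gg.
  - have [gD gZ _ _] := gh.
    by rewrite fx gD gZ gg gx scaleNr subrK.
have fg' : cancel g f.
  move=> y; apply: (uA' _ _ (ah_comp gh fh) (ah_id A')) => /=.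
  - by rewrite gg fg.
  - have [fD fZ _ _] := fh.
    by rewrite gx fD fZ fx fg scaleNr addrK.
exists f; split => //; first by exists g.
case: Hrho => [[cD cZ cM c1] [cg cx]].
case: Hrho' => [[cD' cZ' cM' c1'] [cg' cx']].
have [fD fZ fM f1] := fh.
pose P : {pred A} := [pred y | [forall i, [forall j, rho' (f y) i j == f (rho y i j)]]].
have PE y : reflect (forall i j, rho' (f y) i j = f (rho y i j)) (y \in P).
  apply: (iffP forallP) => [H i j | H i]; first by have /forallP/(_ j)/eqP := H i.
  by apply/forallP => j; apply/eqP.
suff allP : forall y, y \in P by move=> y i j; apply/PE.
apply: (gen_all _ _ _ _ HB0).
- by apply/PE => i j; rewrite f1 c1 c1' f_tbas // f1.
- move=> x y /PE Hx /PE Hy; apply/PE => i j.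
  by rewrite fD cD cD' /tadd Hx Hy fD.
- move=> r x /PE Hx; apply/PE => i j.
  by rewrite fZ cZ cZ' Hx fZ.
- move=> x y /PE Hx /PE Hy; apply/PE => i j.
  by rewrite fM cM cM' f_tmul //; apply: tmul_ext.
- by apply/PE => i j; rewrite fg cg cg' f_tbas // fg.
- apply/PE => i j; rewrite fx cD' cZ' cg' cx' cx /tadd fD.
  rewrite (f_tbas 1 0 1 i j fh) (f_tbas vx 1 0 i j fh) f1 fx /tbas; case: ifP => _; case: ifP => _; rewrite ?scaler0 ?addr0 ?add0r ?scalerDr ?addrA.
  all: done.
Qed.
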